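(* Let $p$ and $q$ be two distinct odd primes and let $\delta$ be a positive divisor of $\lambda(pq)$. Then $$\sum_{\substack{a\in U_{pq}\\ \mathrm{ind}_{pq}(a)=\delta}}a\equiv \mu\big((\delta,p-1)\big)\, I\!\left(\Big(\frac{\delta}{(\delta,p-1)},\,p-1\Big)\right)\frac{\phi(\delta)}{\phi((\delta,p-1))}\pmod p.$$
   Context: $U_m$ denotes the set of invertible residue classes in $\mathbb{Z}/m\mathbb{Z}$ (the sum runs over one representative of each such class). For $a$ coprime to $m$, $\mathrm{ind}_m(a)$ is the multiplicative order of $a$ modulo $m$. $\lambda(m)$ is the Carmichael function: the smallest $k>0$ such that $a^k\equiv 1\pmod m$ for all $a\in U_m$. $\mu$ is the Möbius function, $\phi$ Euler's totient function, $(x,y)$ the greatest common divisor, and $I(n)=\lfloor 1/n\rfloor$ for positive integers $n$ (so $I(1)=1$ and $I(n)=0$ for $n>1$). *)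

(* Defs.v *)
From mathcomp Require Import all_boot all_order all_algebra all_solvable.
Set Implicit Arguments. Unset Strict Implicit. Unset Printing Implicit Defensive.

(* ind_m(a): multiplicative order of a modulo m, i.e. the least k > 0 with
   a^k = 1 (mod m).  (For a not coprime to m it is an irrelevant dummy value.) *)
Definition ind_pred (m a : nat) : pred nat :=
  fun k => (0 < k) && (coprime a m ==> (a ^ k == 1 %[mod m])).

Lemma ind_ex (m a : nat) : exists k, ind_pred m a k.
Proof.
case: m => [|m].
  exists 1; rewrite /ind_pred /= /coprime gcdn0 expn1 !modn0.
  by case: (a == 1).
exists (totient m.+1); rewrite /ind_pred totient_gt0 /=.
by apply/implyP => co; apply/eqP; apply: Euler_exp_totient.
Qed.

Definition ind (m a : nat) : nat := ex_minn (ind_ex m a).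

Definition carmichael_pred (m : nat) : pred nat :=
  fun k => (0 < k) && [forall a : 'I_m, coprime a m ==> (a ^ k == 1 %[mod m])].

Lemma carmichael_ex (m : nat) : exists k, carmichael_pred m k.
Proof.
case: m => [|m].
  by exists 1; rewrite /carmichael_pred /=; apply/forallP => -[].
exists (totient m.+1); rewrite /carmichael_pred totient_gt0 /=.
by apply/forallP => a; apply/implyP => co; apply/eqP; apply: Euler_exp_totient.
Qed.

Definition carmichael (m : nat) : nat := ex_minn (carmichael_ex m).

Definition squarefree (n : nat) : bool := all (fun p => logn p n == 1) (primes n).

Definition mobius (n : nat) : int :=
  if (0 < n) && squarefree n then ((-1) ^+ size (primes n))%R else 0%R.

Definition Ifl (n : nat) : nat := 1 %/ n.

(* Main.v *)
Require Import Defs.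
From mathcomp Require Import all_boot all_order all_algebra all_solvable.
Import GRing.Theory.
From mathcomp Require Import zify.
Set Implicit Arguments. Unset Strict Implicit. Unset Printing Implicit Defensive.

Lemma card_multiples n m : 0 < m ->
  #|[pred k : 'I_(n * m) | m %| k]| = n.
Proof.
move=> m0.
have lt j : j < n -> j * m < n * m by move=> jn; rewrite ltn_pmul2r.
pose f (j : 'I_n) : 'I_(n * m) := Ordinal (lt _ (ltn_ord j)).
have finj : injective f.
  by move=> i j /(congr1 val) /= /eqP; rewrite eqn_pmul2r // => /eqP /val_inj.
rewrite -[RHS](card_ord n) -(card_imset _ finj); apply: eq_card => k.
rewrite inE; apply/idP/imsetP => [/dvdnP [j hj] | [j _ ->]]; last first.
  by rewrite /= dvdn_mull.
have jn : j < n by rewrite -(ltn_pmul2r m0) -hj ltn_ord.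
by exists (Ordinal jn) => //; apply: val_inj.
Qed.
Lemma expn_mod1 m a i j : a ^ i = 1 %[mod m] -> a ^ (i * j) = 1 %[mod m].
Proof.
move=> h; rewrite expnM -modnXm h modnXm exp1n //.
Qed.

Lemma ind_spec m a : coprime a m ->
  0 < ind m a /\ forall k, (a ^ k == 1 %[mod m]) = (ind m a %| k).
Proof.
move=> co; rewrite /ind; case: ex_minnP => i /andP[i0 /implyP /(_ co) /eqP hi] imin.
split=> // k; apply/idP/idP; last first.
  by case/dvdnP=> j ->; rewrite mulnC; apply/eqP/expn_mod1.
move=> /eqP hk; rewrite /dvdn; apply/negPn/negP => nz.
have: ind_pred m a (k %% i).
  rewrite /ind_pred lt0n nz /=; apply/implyP => _.
  move: hk; rewrite {1}(divn_eq k i) expnD -modnMml (mulnC (k %/ i)).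
  by rewrite (expn_mod1 _ hi) modnMml mul1n => ->.
move/imin; rewrite leqNgt ltn_mod i0 //.
Qed.
Lemma prim_root q : prime q -> exists g, forall k, (g ^ k == 1 %[mod q]) = (q.-1 %| k).
Proof.
move=> qp; have q1 := prime_gt1 qp.
have /cyclicP[u hu] := units_Zp_cyclic qp.
have ou : fingroup.order u = q.-1.
  by rewrite /fingroup.order -hu card_units_Zp ?prime_gt0 // totient_prime.
exists (val (FinRing.uval u)) => k.
rewrite -ou order_dvdn -(inj_eq val_inj) /= FinRing.val_unitX.
set x := FinRing.uval u; set g := val x.
have -> : (x ^+ k = (g ^ k)%:R)%R by rewrite natrX natr_Zp.
rewrite -(mulr1n 1%R) -(inj_eq val_inj) /= !val_Zp_nat // Zp_cast //.
Qed.
Lemma card_multiples' N n m : N = n * m -> 0 < m ->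
  #|[pred k : 'I_N | m %| k]| = n.
Proof. by move=> -> m0; apply: card_multiples. Qed.

Lemma prim_coprime q g : prime q -> (forall k, (g ^ k == 1 %[mod q]) = (q.-1 %| k)) ->
  coprime g q.
Proof.
move=> qp hg; rewrite coprime_sym prime_coprime //; apply/negP => qg.
have := hg q.-1; rewrite dvdnn (modn_small (prime_gt1 qp)).
have : q %| g ^ q.-1 by rewrite dvdn_exp // -ltnS prednK ?prime_gt0 // prime_gt1.
by rewrite /dvdn => /eqP ->.
Qed.

Lemma card_coprime q : #|[pred y : 'I_q | coprime y q]| = totient q.
Proof.
rewrite totient_count_coprime big_mkord -sum1_card big_mkcond.
by apply: eq_bigr => i _; rewrite inE coprime_sym; case: (coprime q i).
Qed.

Lemma aux_lt a b Q : a < b -> b < Q -> Q <= a + (Q - b) -> False.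
Proof. lia. Qed.

Lemma count_roots q n : prime q -> n %| q.-1 ->
  #|[pred y : 'I_q | coprime y q && (y ^ n == 1 %[mod q])]| = n.
Proof.
move=> qp nQ; have q0 := prime_gt0 qp; have q1 := prime_gt1 qp.
have [g hg] := prim_root qp; have cg := prim_coprime qp hg.
set Q := q.-1 in nQ hg *.
have Q0 : 0 < Q by rewrite /Q -ltnS prednK.
pose e (k : 'I_Q) : 'I_q := Ordinal (ltn_pmod (g ^ k) q0).
have einj : injective e.
  move=> i j /(congr1 val) /= hij.
  have h1 i' j' : g ^ i' = g ^ j' %[mod q] -> i' < Q -> j' < Q -> i' <= j'.
    move=> h i'Q j'Q.
    have : g ^ (j' + (Q - i')) == 1 %[mod q].
      by rewrite expnD -modnMml -h modnMml -expnD (subnKC (ltnW i'Q)) hg.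
    rewrite hg leqNgt => hd; apply/negP => lt.
    have x0 : 0 < j' + (Q - i') by rewrite addn_gt0 subn_gt0 i'Q orbT.
    exact: (aux_lt lt i'Q (dvdn_leq x0 hd)).
  by apply: val_inj; apply/eqP; rewrite eqn_leq (h1 i j) ?(h1 j i).
have eU k : coprime (e k) q by rewrite /= coprime_modl coprimeXl.
have surj (y : 'I_q) : coprime y q -> exists k, y = e k.
  move=> cy.
  have : [set e k | k in 'I_Q] == [set y : 'I_q | coprime y q].
    rewrite eqEcard; apply/andP; split.
      by apply/subsetP => z /imsetP [k _ ->]; rewrite inE.
    rewrite card_imset // card_ord cardsE.
    by rewrite (card_coprime q) totient_prime.
  move/eqP/setP/(_ y); rewrite inE cy => /imsetP [k _ ->]; by exists k.
have n0 : 0 < n by apply: dvdn_gt0 Q0 nQ.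
have ekn k : ((e k) ^ n == 1 %[mod q]) = (Q %| k * n).
  by rewrite /= modnXm -expnM hg.
transitivity #|[pred k : 'I_Q | Q %/ n %| k]|; last first.
  apply: card_multiples'; first by rewrite mulnC divnK.
  by rewrite divn_gt0 // dvdn_leq.
rewrite -(card_imset _ einj); apply: eq_card => y; rewrite !inE; apply/idP/imsetP.
  case/andP => cy; case: (surj y cy) => k -> ; rewrite ekn => hk.
  exists k => //; rewrite inE.
  by rewrite -(dvdn_pmul2r n0) divnK.
case => k; rewrite inE => hk ->; rewrite eU ekn /=.
by move: hk; rewrite -(dvdn_pmul2r n0) divnK.
Qed.
Lemma Fp_eq_mod p a b : prime p -> ((a%:R : 'F_p) == b%:R)%R = (a == b %[mod p]).
Proof. by move=> pp; rewrite -(inj_eq val_inj) /= !val_Fp_nat. Qed.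

Lemma sum_roots_p p n : prime p -> 0 < n ->
  (\sum_(x < p | coprime x p && (x ^ n == 1 %[mod p])) (x%:R : 'F_p))%R
    = ((coprime n p.-1)%:R)%R.
Proof.
move=> pp n0; have p0 := prime_gt0 pp; have p1 := prime_gt1 pp.
case: (boolP (coprime n p.-1)) => [cnP | ncnP].
  rewrite (big_pred1 (Ordinal p1)) // => x /=.
  apply/idP/eqP => [/andP [cx hx] | ->]; last by rewrite coprime1n exp1n eqxx.
  have [i0 hi] := ind_spec cx.
  have h1 : ind p x %| gcdn n p.-1.
    rewrite dvdn_gcd -!hi hx /=; have := Euler_exp_totient cx.
    by rewrite totient_prime // => ->.
  move: h1; rewrite (eqP cnP) dvdn1 => /eqP h1.
  have := hi 1; rewrite h1 dvdnn expn1 (modn_small p1) (modn_small (ltn_ord x)).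
  by move/eqP => h; apply: val_inj.
set P := p.-1.
have P0 : 0 < P by rewrite /P -ltnS prednK.
have g1 : 1 < gcdn n P.
  by rewrite ltn_neqAle eq_sym ncnP gcdn_gt0 n0.
set l := pdiv (gcdn n P).
have lp : prime l := pdiv_prime g1.
have ldvd : l %| gcdn n P := pdiv_dvd _.
have ln : l %| n by apply: dvdn_trans ldvd (dvdn_gcdl _ _).
have lP : l %| P by apply: dvdn_trans ldvd (dvdn_gcdr _ _).
have [g hg] := prim_root pp; have cg := prim_coprime pp hg.
set z := g ^ (P %/ l).
have cz : coprime z p by rewrite coprimeXl.
have zn : z ^ n = 1 %[mod p].
  apply/eqP; rewrite -expnM hg.
  by apply: (dvdn_trans _ (dvdn_mul (dvdnn (P %/ l)) ln)); rewrite divnK.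
have z0 : (z%:R : 'F_p)%R != 0%R.
  rewrite -(mulr0n 1%R) Fp_eq_mod // mod0n -/(dvdn _ _).
  by rewrite -prime_coprime // coprime_sym.
have z1 : (z%:R : 'F_p)%R != 1%R.
  rewrite -(mulr1n 1%R) Fp_eq_mod // hg.
  have d0 : 0 < P %/ l by rewrite (divn_gt0 _ (prime_gt0 lp)) (dvdn_leq P0 lP).
  apply/negP => /(dvdn_leq d0); rewrite leqNgt.
  by rewrite (ltn_Pdiv (prime_gt1 lp) P0).
pose h (x : 'I_p) : 'I_p := Ordinal (ltn_pmod (z * x) p0).
have hv x : ((h x)%:R : 'F_p)%R = (z%:R * x%:R)%R by rewrite /= Fp_nat_mod // natrM.
have hinj : injective h.
  move=> x y hxy; have := congr1 (fun u : 'I_p => (u%:R : 'F_p)%R) hxy.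
  rewrite /= !hv => /(mulfI z0) /eqP; rewrite Fp_eq_mod // !modn_small //.
  by move/eqP/val_inj.
have hA x : (coprime (h x) p && (h x ^ n == 1 %[mod p])) = (coprime x p && (x ^ n == 1 %[mod p])).
  rewrite /= coprime_modl coprimeMl cz /= modnXm expnMn -modnMml zn modnMml mul1n //.
set S := (\sum_(x < p | _) _)%R.
have hS : S = (z%:R * S)%R.
  rewrite {1}/S (reindex_inj hinj) /= (eq_bigl _ _ hA) mulr_sumr.
  by apply: eq_bigr => x _; rewrite hv.
apply/eqP; move: hS => /eqP; rewrite -subr_eq0 -{1}(mul1r S) -mulrBl mulf_eq0.
by rewrite subr_eq0 eq_sym (negbTE z1).
Qed.
Definition Gs (m n : nat) := \sum_(a < m | coprime a m && (a ^ n == 1 %[mod m])) a.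
Definition Fs (m d : nat) := \sum_(a < m | coprime a m && (ind m a == d)) a.

Lemma G_Fp p q n : prime p -> prime q -> p != q ->
  ((Gs (p*q) n)%:R : 'F_p)%R =
  ((\sum_(x < p | coprime x p && (x ^ n == 1 %[mod p])) (x%:R : 'F_p))
     *+ #|[pred y : 'I_q | coprime y q && (y ^ n == 1 %[mod q])]|)%R.
Proof.
move=> pp qp pq; have p0 := prime_gt0 pp; have q0 := prime_gt0 qp.
have pq0 : 0 < p * q by rewrite muln_gt0 p0.
have cpq : coprime p q by rewrite prime_coprime // dvdn_prime2.
pose h (u : 'I_p * 'I_q) : 'I_(p * q) := Ordinal (ltn_pmod (chinese p q u.1 u.2) pq0).
pose k (a : 'I_(p * q)) : 'I_p * 'I_q := (Ordinal (ltn_pmod a p0), Ordinal (ltn_pmod a q0)).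
have hb : bijective h.
  exists k.
    case=> x y; congr pair; apply: val_inj => /=.
      by rewrite modn_dvdm ?dvdn_mulr // chinese_modl // modn_small.
    by rewrite modn_dvdm ?dvdn_mull // chinese_modr // modn_small.
  move=> a; apply: val_inj => /=.
  rewrite -[RHS](modn_small (ltn_ord a)).
  by rewrite -chinese_mod.
have hp u : h u %% p = u.1.
  by rewrite /= modn_dvdm ?dvdn_mulr // chinese_modl // modn_small.
have hq u : h u %% q = u.2.
  by rewrite /= modn_dvdm ?dvdn_mull // chinese_modr // modn_small.
rewrite /Gs natr_sum (reindex h); last by apply: onW_bij.
have hc u : (coprime (h u) (p * q) && (h u ^ n == 1 %[mod p * q])) =
   (coprime u.1 p && (u.1 ^ n == 1 %[mod p])) && (coprime u.2 q && (u.2 ^ n == 1 %[mod q])).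
  rewrite coprimeMr chinese_remainder // -(coprime_modl (h u) p) -(coprime_modl (h u) q).
  by rewrite -modnXm -(modnXm n q) hp hq andbACA.
rewrite (eq_bigl _ _ hc).
under eq_bigr => u _ do rewrite -Fp_nat_mod // hp.
rewrite -(pair_big_dep (fun x : 'I_p => coprime x p && (x ^ n == 1 %[mod p]))
  (fun _ (y : 'I_q) => coprime y q && (y ^ n == 1 %[mod q])) (fun x _ => (x%:R : 'F_p)%R)) /=.
rewrite -sumrMnl; apply: eq_bigr => x _.
by rewrite sumr_const.
Qed.

Lemma G_F m n : 0 < n -> Gs m n = \sum_(d < n.+1 | d %| n) Fs m d.
Proof.
move=> n0; rewrite /Gs /Fs.
have e1 (a : 'I_m) : (coprime a m && (a ^ n == 1 %[mod m])) =
    (coprime a m && (ind m a %| n)).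
  by case: (boolP (coprime a m)) => //= ca; have [_ ->] := ind_spec ca.
rewrite (eq_bigl _ _ e1).
rewrite (partition_big (fun a : 'I_m => (inord (ind m a) : 'I_n.+1)) (fun d : 'I_n.+1 => d %| n)).
  apply: eq_bigr => d dn; apply: eq_bigl => a.
  case: (boolP (coprime a m)) => //= ca.
  case: (boolP (ind m a %| n)) => /= hi.
    by rewrite -(inj_eq val_inj) /= inordK // ltnS dvdn_leq.
  by apply/esym/negP => /eqP h; rewrite h dn in hi.
move=> a /andP [ca hi]; rewrite inordK // ltnS dvdn_leq //.
Qed.

Lemma carm_dvd p q : prime p -> prime q -> p != q ->
  carmichael (p * q) %| lcmn p.-1 q.-1.
Proof.
move=> pp qp pq; have cpq : coprime p q by rewrite prime_coprime // dvdn_prime2.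
set L := lcmn p.-1 q.-1.
have L0 : 0 < L by rewrite lcmn_gt0 -!subn1 !subn_gt0 !prime_gt1.
have hL (a : nat) : coprime a (p * q) -> a ^ L == 1 %[mod p * q].
  rewrite coprimeMr chinese_remainder // => /andP [ap aq].
  apply/andP; split; apply/eqP.
    have := Euler_exp_totient ap; rewrite totient_prime // => h.
    by rewrite /L -(divnK (dvdn_lcml p.-1 q.-1)) mulnC expn_mod1.
  have := Euler_exp_totient aq; rewrite totient_prime // => h.
  by rewrite /L -(divnK (dvdn_lcmr p.-1 q.-1)) mulnC expn_mod1.
rewrite /carmichael; case: ex_minnP => c /andP [c0 /forallP hc] cmin.
apply/gcdn_idPl/eqP; rewrite eqn_leq dvdn_leq ?dvdn_gcdl ?gcdn_gt0 ?c0 //=.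
apply: cmin; rewrite /carmichael_pred gcdn_gt0 c0 /=.
apply/forallP => a; apply/implyP => ca; have [_ hi] := ind_spec ca.
by rewrite hi dvdn_gcd -!hi hL // (implyP (hc a)).
Qed.
Lemma mobius1 : mobius 1 = 1%R.
Proof. by []. Qed.

Lemma mobius_pM l a : prime l -> 0 < a -> ~~ (l %| a) -> mobius (l * a) = (- mobius a)%R.
Proof.
move=> lp a0 nla; have la0 : 0 < l * a by rewrite muln_gt0 prime_gt0.
have hpr : primes (l * a) =i l :: primes a.
  by move=> x; rewrite (primesM _ (prime_gt0 lp) a0) primes_prime // !in_cons in_nil orbF.
have nl : l \notin primes a by rewrite mem_primes lp a0.
have usz : size (primes (l * a)) = (size (primes a)).+1.
  have := uniq_size_uniq (primes_uniq (l * a)) hpr.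
  by rewrite /= nl primes_uniq => /esym/eqP.
have sq : squarefree (l * a) = squarefree a.
  rewrite /squarefree (eq_all_r hpr) /= (lognM _ (prime_gt0 lp) a0) logn_prime // eqxx.
  have cla : coprime l a by rewrite prime_coprime.
  rewrite (logn_coprime cla) addn0 /=.
  apply: eq_in_all => r ra; rewrite (lognM _ (prime_gt0 lp) a0) logn_prime //.
  have rl : (r == l) = false by apply/negP => /eqP e; rewrite -e ra in nl.
  by rewrite rl.
rewrite /mobius la0 a0 sq usz /=; case: (squarefree a) => //.
by rewrite exprS mulN1r.
Qed.

Lemma mobius_sq l a : prime l -> l ^ 2 %| a -> mobius a = 0%R.
Proof.
move=> lp la; rewrite /mobius; case: (posnP a) => [->|a0] //=.
have : ~~ squarefree a.
  have lin : l \in primes a by rewrite mem_primes lp a0 (dvdn_trans (dvdn_exp (isT : 0 < 2) (dvdnn l)) la).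
  rewrite /squarefree; apply/allPn; exists l => //.
  rewrite neq_ltn; apply/orP; right.
  by rewrite -pfactor_dvdn.
by move/negbTE => ->.
Qed.
Definition fH (P d : nat) : int :=
  (mobius (d`_(\pi(P))) * (totient (d`_(\pi(P))^'))%:Z)%R.

Lemma pi_mem P l : prime l -> 0 < P -> l %| P -> l \in \pi(P).
Proof. by move=> lp P0 lP; rewrite mem_primes lp P0. Qed.

Lemma sq_part P l d : prime l -> 0 < P -> 0 < d -> l %| P -> l ^ 2 %| d -> l ^ 2 %| d`_(\pi(P)).
Proof.
move=> lp P0 d0 lP ld.
have cl : coprime (l ^ 2) (d`_(\pi(P))^').
  apply: (pnat_coprime (pi := \pi(P))); last exact: part_pnat.
  by rewrite pnatX (pnatE _ lp) pi_mem.
by rewrite -(Gauss_dvdl _ cl) partnC.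
Qed.

Lemma fH_sq P l d : prime l -> 0 < P -> 0 < d -> l %| P -> l ^ 2 %| d -> fH P d = 0%R.
Proof.
move=> lp P0 d0 lP ld; rewrite /fH (mobius_sq lp (sq_part lp P0 d0 lP ld)) mul0r //.
Qed.

Lemma fH_pM P l e : prime l -> 0 < P -> l %| P -> 0 < e -> ~~ (l %| e) ->
  fH P (l * e) = (- fH P e)%R.
Proof.
move=> lp P0 lP e0 nle; rewrite /fH !(partnM _ (prime_gt0 lp) e0).
have lpi : (\pi(P)).-nat l by rewrite (pnatE _ lp) pi_mem.
have l' : l`_(\pi(P))^' = 1 by apply: part_p'nat; rewrite pnatNK.
rewrite (part_pnat_id lpi) l' mul1n.
rewrite (mobius_pM lp (part_gt0 _ _)) ?mulNr //.
by apply: contra nle => h; apply: dvdn_trans h (dvdn_part _ _).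
Qed.

Lemma H_eq P d : 0 < P -> 0 < d ->
  (mobius (gcdn d P) * (Ifl (gcdn (d %/ gcdn d P) P) * (totient d %/ totient (gcdn d P)))%:Z)%R
  = fH P d.
Proof.
move=> P0 d0; set g := gcdn d P; set e := d %/ g.
have g0 : 0 < g by rewrite gcdn_gt0 d0.
have de : d = e * g by rewrite divnK // dvdn_gcdl.
have e0 : 0 < e by rewrite divn_gt0 // dvdn_leq // dvdn_gcdl.
case: (boolP (coprime e P)) => ceP.
  rewrite (eqP ceP) /Ifl divnn /= mul1n.
  have gpi : (\pi(P)).-nat g by apply: (pnat_dvd (dvdn_gcdr d P)); apply: pnat_pi.
  have epi : (\pi(P))^'.-nat e by rewrite -coprime_pi' // coprime_sym.
  have ceg : coprime e g by apply: coprime_dvdr (dvdn_gcdr d P) ceP.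
  rewrite /fH {2 3}de !(partnM _ e0 g0) (part_p'nat epi) (part_pnat_id gpi).
  rewrite (part_pnat_id epi) part_p'nat ?pnatNK // mul1n muln1.
  by rewrite de totient_coprime // mulnK // totient_gt0.
have ge1 : 1 < gcdn e P.
  by rewrite ltn_neqAle eq_sym ceP gcdn_gt0 e0.
rewrite /Ifl divn_small // mul0n mulr0.
set l := pdiv (gcdn e P).
have lp : prime l := pdiv_prime ge1.
have le : l %| e by apply: dvdn_trans (pdiv_dvd _) (dvdn_gcdl _ _).
have lP : l %| P by apply: dvdn_trans (pdiv_dvd _) (dvdn_gcdr _ _).
have lg : l %| g.
  rewrite dvdn_gcd lP andbT de; exact: dvdn_mulr.
have l2 : l ^ 2 %| d by rewrite de expnS expn1 dvdn_mul.
by rewrite (fH_sq lp P0 d0 lP l2).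
Qed.

Lemma H_sum P n : 0 < P -> 0 < n ->
  (\sum_(d < n.+1 | (d %| n)%N) fH P d)%R = (if coprime n P then (n%:Z) else 0)%R.
Proof.
move=> P0 n0; case: (boolP (coprime n P)) => [cnP | ncnP].
  transitivity (Posz (\sum_(d < n.+1 | (d %| n)%N) totient d)%N); last first.
    by rewrite sum_totient_dvd.
  rewrite -natz natr_sum.
  apply: eq_bigr => d dn; rewrite natz.
  have d0 : 0 < d by apply: dvdn_gt0 n0 dn.
  have cdP : coprime P d by rewrite coprime_sym (coprime_dvdl dn cnP).
  have dpi : (\pi(P))^'.-nat d by rewrite -coprime_pi'.
  by rewrite /fH (part_p'nat dpi) (part_pnat_id dpi) mobius1 mul1r.
have g1 : 1 < gcdn n P by rewrite ltn_neqAle eq_sym ncnP gcdn_gt0 n0.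
set l := pdiv (gcdn n P).
have lp : prime l := pdiv_prime g1.
have ln : l %| n by apply: dvdn_trans (pdiv_dvd _) (dvdn_gcdl _ _).
have lP : l %| P by apply: dvdn_trans (pdiv_dvd _) (dvdn_gcdr _ _).
have l0 := prime_gt0 lp.
pose S d := (d %| n) && ~~ (l ^ 2 %| d).
pose sg d := if S d then (if l %| d then d %/ l else l * d) else d.
have l2E : l ^ 2 = l * l by rewrite expnS expn1.
have F1 d : S d -> [/\ S (sg d), sg (sg d) = d & fH P (sg d) = (- fH P d)%R].
  move=> Sd; move: (Sd); rewrite /S => /andP [dn nl2].
  have d0 : 0 < d by apply: dvdn_gt0 n0 dn.
  have -> : sg d = (if l %| d then d %/ l else l * d) by rewrite /sg Sd.
  case: (boolP (l %| d)) => ld.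
    have dE : d = l * (d %/ l) by rewrite mulnC divnK.
    set v := d %/ l in dE *.
    have v0 : 0 < v by move: d0; rewrite dE muln_gt0 => /andP [].
    have nlv : ~~ (l %| v).
      by apply: contra nl2 => h; rewrite dE l2E dvdn_pmul2l.
    have Sv : S v.
      rewrite /S (dvdn_trans (dvdn_mull l (dvdnn v))) -?dE //=.
      by apply: contra nlv => h; apply: dvdn_trans h; rewrite l2E dvdn_mull.
    split => //; first by rewrite /sg Sv (negbTE nlv) -dE.
    by rewrite [in RHS]dE (fH_pM lp P0 lP v0 nlv) opprK.
  have cld : coprime l d by rewrite prime_coprime.
  have Sw : S (l * d).
    rewrite /S Gauss_dvd // ln dn /=.
    by rewrite l2E dvdn_pmul2l.
  split => //; first by rewrite /sg Sw dvdn_mulr // mulKn.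
  by rewrite fH_pM.
have F2 d : ~~ S d -> sg d = d by rewrite /sg => /negbTE ->.
have sgI d : sg (sg d) = d.
  by case: (boolP (S d)) => Sd; [case: (F1 d Sd) | rewrite !F2].
have sgS d : S (sg d) = S d.
  case: (boolP (S d)) => Sd; first by case: (F1 d Sd) => ->.
  by rewrite F2 // (negbTE Sd).
have sglt (d : 'I_n.+1) : sg d < n.+1.
  case: (boolP (S d)) => Sd; last by rewrite F2 // ltn_ord.
  have : S (sg d) by rewrite sgS.
  by case/andP => h _; rewrite ltnS dvdn_leq.
pose sig (d : 'I_n.+1) : 'I_n.+1 := inord (sg d).
have sigv d : nat_of_ord (sig d) = sg d by rewrite /sig inordK.
have siginj : injective sig.
  by move=> x y /(congr1 (fun u : 'I_n.+1 => sg u)); rewrite !sigv !sgI => /val_inj.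
rewrite (bigID (fun d : 'I_n.+1 => (l ^ 2 %| d)%N)) /=.
rewrite [X in (X + _)%R](_ : _ = 0%R).
  rewrite add0r; set T := (\sum_(i < n.+1 | _) _)%R.
  have TT : T = (- T)%R.
    rewrite {1}/T (reindex_inj siginj) /= /T -sumrN.
    apply: eq_big => d; first by rewrite sigv; apply: sgS.
    move=> Sd; have Sd' : S d by rewrite -sgS -sigv.
    by rewrite sigv; case: (F1 d Sd').
  apply/eqP; move/eqP: TT; rewrite -subr_eq0 opprK -mulr2n Num.Theory.mulrn_eq0 //.
apply: big1 => i /andP [idv l2i].
apply: (fH_sq lp P0 _ lP l2i); exact: dvdn_gt0 n0 idv.
Qed.
Lemma Fp_int p x y : prime p -> ((x%:~R : 'F_p) = y%:~R)%R -> (x = y %[mod p])%Z.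
Proof.
move=> pp h; apply/eqP; rewrite eqz_mod_dvd dvdzE /=.
have : (((x - y)%R)%:~R : 'F_p)%R = 0%R by rewrite intrB h subrr.
rewrite [X in (X%:~R)%R]intEsign intrM => /eqP; rewrite mulf_eq0.
rewrite rmorph_sign signr_eq0 /= -pmulrn -(mulr0n 1%R) Fp_eq_mod // mod0n.
by [].
Qed.

Lemma main_ind p q delta : prime p -> prime q -> p != q ->
  delta %| carmichael (p * q) ->
  forall n, 0 < n -> n %| delta ->
  ((Fs (p * q) n)%:R : 'F_p)%R = ((fH p.-1 n)%:~R)%R.
Proof.
move=> pp qp pq dc; have p1 := prime_gt1 pp.
have P0 : 0 < p.-1 by rewrite -ltnS prednK // prime_gt0.
elim/ltn_ind => n IH n0 nd.
have key : (\sum_(d < n.+1 | (d %| n)%N) ((Fs (p * q) d)%:R : 'F_p))%R =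
           (\sum_(d < n.+1 | (d %| n)%N) ((fH p.-1 d)%:~R : 'F_p))%R.
  rewrite -natr_sum -G_F // G_Fp // sum_roots_p // -rmorph_sum H_sum //.
  case: (boolP (coprime n p.-1)) => cnP /=; last by rewrite mul0rn.
  have nQ : n %| q.-1.
    have : n %| p.-1 * q.-1.
      apply: dvdn_trans nd (dvdn_trans dc (dvdn_trans (carm_dvd pp qp pq) _)).
      by rewrite dvdn_lcm dvdn_mulr // dvdn_mull.
    by rewrite Gauss_dvdr.
  by rewrite count_roots // -pmulrn.
move: key; rewrite [in LHS](bigD1 ord_max) /= ?dvdnn // [in RHS](bigD1 ord_max) /= ?dvdnn //.
rewrite [X in (_ + X = _)%R -> _](eq_bigr (fun d : 'I_n.+1 => ((fH p.-1 d)%:~R : 'F_p))%R).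
  by move/addIr.
move=> d /andP [dn dne].
have dlt : d < n.
  rewrite ltn_neqAle -ltnS ltn_ord andbT.
  by apply: contra dne => /eqP h; apply/eqP/val_inj.
apply: IH => //; first exact: dvdn_gt0 n0 dn.
exact: dvdn_trans dn nd.
Qed.

Unset Implicit Arguments.

Theorem theorem1p9 (p q delta : nat) :
  prime p -> prime q -> p != q -> odd p -> odd q ->
  0 < delta -> delta %| carmichael (p * q) ->
  ((\sum_(a < p * q | coprime a (p * q) && (ind (p * q) a == delta)) a)%:Z
   = mobius (gcdn delta p.-1)
     * (Ifl (gcdn (delta %/ gcdn delta p.-1) p.-1)
        * (totient delta %/ totient (gcdn delta p.-1)))%:Z %[mod p])%Z.
Proof.
move=> pp qp pq _ _ d0 dc.
have P0 : 0 < p.-1 by rewrite -ltnS prednK ?prime_gt0 // prime_gt1.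
have h := main_ind pp qp pq dc d0 (dvdnn delta).
rewrite -(H_eq P0 d0) in h.
apply: Fp_int pp _; rewrite -pmulrn; exact: h.
Qed.
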